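(* Let $H$ be an RB function for $\mathcal X_r$, $\eta\ge\max_{p\in\mathcal Q}H(\mathbf f[p])$, let $\epsilon,\epsilon'>0$, let $H_{\mathrm{thr}}\in\mathbb R$, and let $\mathcal V$ be a $1-\epsilon$ confidence region. Let $\lambda$ be the event consisting of all $(\vec a,\vec x)\in\mathcal A^n\times\mathcal X^n$ with $nH(\mathcal V(\vec a,\vec x,\epsilon))-\nu(\vec x)\eta\ge H_{\mathrm{thr}}$ (the abort outcome $\perp$ is not in $\lambda$). Then for every $n$-round device behavior $P_{A\mid X}$ and input distribution $\Pi$, the distribution $P_{AX}$ is $\epsilon$-close in total variation distance to a distribution $\tilde P_{AX}(\vec a,\vec x)=\tilde P(\vec a\mid\vec x)\Pi(\vec x)$ on $(\mathcal A^n\cup\{\perp\})\times\mathcal X^n$ such that, according to $\tilde P_{AX}$, either (i) $\Pr(\lambda)\le\epsilon'$, or (ii) $H_{\min}(A\mid X;\lambda)\ge H_{\mathrm{thr}}-\log_2\frac1{\epsilon'}$, where $H_{\min}(A\mid X;\lambda)=-\log_2\sum_{\vec x}\tilde P(\vec x\mid\lambda)\max_{\vec a}\tilde P(\vec a\mid\vec x;\lambda)$ (conditional probabilities computed from $\tilde P_{AX}$).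
   Context: Setting. A Bell device consists of $k$ boxes with finite input sets $\mathcal X_i$ and output sets $\mathcal A_i$; $\mathcal X=\prod_i\mathcal X_i$, $\mathcal A=\prod_i\mathcal A_i$. Single-round behaviors $p=(p(a\mid x))_{a,x}$; $\mathcal Q$ the set of quantum behaviors (realizable by a $k$-partite quantum state and local measurements). Bell expression $f$: $f[p]=\sum_{a,x}f(a,x)p(a\mid x)$; fixed $\mathbf f=(f_1,\dots,f_t)$, $\mathbf f[p]\in\mathbb R^t$, $\mathbf f[\mathcal Q]=\{\mathbf f[p]:p\in\mathcal Q\}$. $n$-round device behavior: $P(\vec a\mid\vec x)=\prod_{j=1}^np_{\vec a_{j-1},\vec x_{j-1}}(a_j\mid x_j)$ with each $p_{\vec a_{j-1},\vec x_{j-1}}\in\mathcal Q$, where $\vec a_j,\vec x_j$ are length-$j$ prefixes. Inputs drawn with $\Pi(\vec x)=\prod_j\pi(x_j)$ for a distribution $\pi$ on $\mathcal X$; $P_{AX}(\vec a,\vec x)=P(\vec a\mid\vec x)\Pi(\vec x)$. RB function for nonempty $\mathcal X_r\subseteq\mathcal X$: $H:\mathbf f[\mathcal Q]\to[0,\log_2|\mathcal A|]$ with (1) $\min_{a\in\mathcal A,x\in\mathcal X_r}(-\log_2p(a\mid x))\ge H(\mathbf f[p])$ for all $p\in\mathcal Q$; (2) $H(q\mathbf f[p_1]+(1-q)\mathbf f[p_2])\le qH(\mathbf f[p_1])+(1-q)H(\mathbf f[p_2])$ for $q\in[0,1]$, $p_1,p_2\in\mathcal Q$. For $\mathcal V\subseteq\mathbb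 R^t$, $H(\mathcal V)$ is a fixed number $\le\inf\{H(\mathbf y):\mathbf y\in\mathbf f[\mathcal Q]\cap\mathcal V\}$, and $0$ if the intersection is empty. $\nu(\vec x)=\#\{j:x_j\notin\mathcal X_r\}$. A $1-\epsilon$ confidence region is an assignment $(\vec a,\vec x)\mapsto\mathcal V(\vec a,\vec x,\epsilon)\subseteq\mathbb R^t$ such that for every $n$-round device behavior, $\Pr_{P_{AX}}[\frac1n\sum_{j=1}^n\mathbf f[p_{\vec a_{j-1},\vec x_{j-1}}]\in\mathcal V(\vec a,\vec x,\epsilon)]\ge1-\epsilon$. *)

(* Defs.v *)
From Stdlib Require Import Reals ClassicalEpsilon.
From mathcomp Require Import all_boot.
Set Implicit Arguments. Unset Strict Implicit. Unset Printing Implicit Defensive.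
Local Open Scope R_scope.

Definition sumR {T} (s : seq T) (F : T -> R) : R := foldr (fun x acc => F x + acc) 0 s.
Definition prodR {T} (s : seq T) (F : T -> R) : R := foldr (fun x acc => F x * acc) 1 s.
(* maximum over a list; used only for nonnegative quantities (default 0). *)
Definition maxR {T} (s : seq T) (F : T -> R) : R := foldr (fun x acc => Rmax (F x) acc) 0 s.
Definition fsum (T : finType) (F : T -> R) : R := sumR (enum T) F.
Definition fmax (T : finType) (F : T -> R) : R := maxR (enum T) F.

Definition ind (P : Prop) : R := if excluded_middle_informative P then 1 else 0.

Definition log2 (x : R) : R := ln x / ln 2.

Definition is_distr (T : finType) (d : T -> R) : Prop :=
  (forall x, 0 <= d x) /\ fsum d = 1.

(* A = prod_i A_i (outputs), X = prod_i X_i (inputs); behaviour p(a|x) *)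
Definition behavior (A X : finType) := A -> X -> R.
Definition vec (t : nat) := 'I_t -> R.

Definition bell_val (A X : finType) (t : nat) (f : 'I_t -> A -> X -> R)
  (p : behavior A X) : vec t :=
  fun i => fsum (fun ax : A * X => f i ax.1 ax.2 * p ax.1 ax.2).

Definition is_RB_function (A X : finType) (t : nat) (Q : behavior A X -> Prop)
  (f : 'I_t -> A -> X -> R) (Xr : pred X) (H : vec t -> R) : Prop :=
  (forall p, Q p -> 0 <= H (bell_val f p) <= log2 (INR #|A|)) /\
  (* (1): min_{a, x in Xr} (-log2 p(a|x)) >= H(f[p])   (-log2 0 = +oo) *)
  (forall p, Q p -> forall a x, Xr x -> 0 < p a x -> - log2 (p a x) >= H (bell_val f p)) /\
  (forall q p1 p2, 0 <= q <= 1 -> Q p1 -> Q p2 ->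
     H (fun i => q * bell_val f p1 i + (1 - q) * bell_val f p2 i)
       <= q * H (bell_val f p1) + (1 - q) * H (bell_val f p2)).

(* H(V): a fixed number <= inf { H(y) : y in f[Q] cap V }, and 0 if empty *)
Definition is_set_extension (A X : finType) (t : nat) (Q : behavior A X -> Prop)
  (f : 'I_t -> A -> X -> R) (H : vec t -> R) (HV : (vec t -> Prop) -> R) : Prop :=
  (forall (S : vec t -> Prop) p, Q p -> S (bell_val f p) -> HV S <= H (bell_val f p)) /\
  (forall (S : vec t -> Prop), (forall p, Q p -> ~ S (bell_val f p)) -> HV S = 0).

(* An n-round device behaviour: for each history (prefixes a_{j-1}, x_{j-1})
   a single-round behaviour p_{a_{j-1},x_{j-1}} in Q. *)
Definition device_ok (A X : finType) (n : nat) (Q : behavior A X -> Prop)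
  (beh : seq A -> seq X -> behavior A X) : Prop :=
  forall (sa : seq A) (sx : seq X), size sa = size sx -> (size sa < n)%N -> Q (beh sa sx).

Definition devP (A X : finType) (n : nat) (beh : seq A -> seq X -> behavior A X)
  (a : n.-tuple A) (x : n.-tuple X) : R :=
  prodR (enum 'I_n) (fun j => beh (take j a) (take j x) (tnth a j) (tnth x j)).

Definition inputP (X : finType) (n : nat) (pi : X -> R) (x : n.-tuple X) : R :=
  prodR (enum 'I_n) (fun j => pi (tnth x j)).

Definition avg_val (A X : finType) (t n : nat) (f : 'I_t -> A -> X -> R)
  (beh : seq A -> seq X -> behavior A X) (a : n.-tuple A) (x : n.-tuple X) : vec t :=
  fun i => / INR n * sumR (enum 'I_n) (fun j => bell_val f (beh (take j a) (take j x)) i).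

Definition conf_region (A X : finType) (t n : nat) (Q : behavior A X -> Prop)
  (f : 'I_t -> A -> X -> R) (pi : X -> R) (eps : R)
  (V : n.-tuple A -> n.-tuple X -> R -> vec t -> Prop) : Prop :=
  forall beh, device_ok n Q beh ->
    fsum (fun ax : n.-tuple A * n.-tuple X =>
            devP beh ax.1 ax.2 * inputP pi ax.2 * ind (V ax.1 ax.2 eps (avg_val f beh ax.1 ax.2)))
    >= 1 - eps.

Definition nu (X : finType) (n : nat) (Xr : pred X) (x : n.-tuple X) : nat :=
  count (fun y => ~~ Xr y) x.

(* ---------- distributions on (A^n cup {bot}) x X^n ; None = bot ---------- *)
Definition P_AX (A X : finType) (n : nat) (beh : seq A -> seq X -> behavior A X)
  (pi : X -> R) (o : option (n.-tuple A)) (x : n.-tuple X) : R :=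
  match o with Some a => devP beh a x * inputP pi x | None => 0 end.

Definition tv_dist (T : finType) (P1 P2 : T -> R) : R :=
  / 2 * fsum (fun z => Rabs (P1 z - P2 z)).

Definition Pt_AX (X : finType) (O : finType) (n : nat) (pi : X -> R)
  (Pt : O -> n.-tuple X -> R) (o : O) (x : n.-tuple X) : R :=
  Pt o x * inputP pi x.

Definition Pr_event (A X : finType) (n : nat)
  (PAX : option (n.-tuple A) -> n.-tuple X -> R)
  (lam : n.-tuple A -> n.-tuple X -> Prop) : R :=
  fsum (fun ax : n.-tuple A * n.-tuple X => PAX (Some ax.1) ax.2 * ind (lam ax.1 ax.2)).

Definition Pr_event_x (A X : finType) (n : nat)
  (PAX : option (n.-tuple A) -> n.-tuple X -> R)
  (lam : n.-tuple A -> n.-tuple X -> Prop) (x : n.-tuple X) : R :=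
  fsum (fun a : n.-tuple A => PAX (Some a) x * ind (lam a x)).

Definition Hmin_lam (A X : finType) (n : nat)
  (PAX : option (n.-tuple A) -> n.-tuple X -> R)
  (lam : n.-tuple A -> n.-tuple X -> Prop) : R :=
  - log2 (fsum (fun x : n.-tuple X =>
      (Pr_event_x PAX lam x / Pr_event PAX lam) *
      fmax (fun a : n.-tuple A => PAX (Some a) x * ind (lam a x) / Pr_event_x PAX lam x))).

(* Main.v *)
From HB Require Import structures.
Require Import Defs.
From Stdlib Require Import Reals ClassicalEpsilon FunctionalExtensionality Lra Classical.
From mathcomp Require Import all_boot.
Set Implicit Arguments. Unset Strict Implicit. Unset Printing Implicit Defensive.
Local Open Scope R_scope.

Lemma RplusA : associative Rplus. Proof. by move=> *; rewrite Rplus_assoc. Qed.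
Lemma RmultA : associative Rmult. Proof. by move=> *; rewrite Rmult_assoc. Qed.
HB.instance Definition _ := Monoid.isComLaw.Build R R0 Rplus RplusA Rplus_comm Rplus_0_l.
HB.instance Definition _ := Monoid.isMulLaw.Build R R0 Rmult Rmult_0_l Rmult_0_r.
HB.instance Definition _ := Monoid.isAddLaw.Build R Rmult Rplus Rmult_plus_distr_r Rmult_plus_distr_l.
HB.instance Definition _ := Monoid.isComLaw.Build R R1 Rmult RmultA Rmult_comm Rmult_1_l.

Lemma sumRE T (s : seq T) F : sumR s F = \big[Rplus/0]_(x <- s) F x.
Proof. elim: s => [|x s IH] /=; by rewrite ?big_nil ?big_cons ?IH. Qed.

Lemma prodRE T (s : seq T) F : prodR s F = \big[Rmult/1]_(x <- s) F x.
Proof. elim: s => [|x s IH] /=; by rewrite ?big_nil ?big_cons ?IH. Qed.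

Lemma fsumE (T : finType) (F : T -> R) : fsum F = \big[Rplus/0]_(x : T) F x.
Proof. by rewrite /fsum sumRE big_enum. Qed.

Lemma big_opt (T : finType) (F : option T -> R) :
  \big[Rplus/0]_(o : option T) F o = F None + \big[Rplus/0]_(a : T) F (Some a).
Proof.
rewrite (bigD1 None) //=; congr (_ + _).
rewrite (reindex_omap Some id) /=; last by case.
by apply: eq_bigl => a; rewrite /= eqxx.
Qed.

Lemma big_ge0 (I : Type) (s : seq I) (P : pred I) (F : I -> R) :
  (forall i, P i -> 0 <= F i) -> 0 <= \big[Rplus/0]_(i <- s | P i) F i.
Proof. move=> H; apply: big_ind => //; [lra | move=> *; lra]. Qed.

Lemma big_leR (I : Type) (s : seq I) (P : pred I) (F G : I -> R) :
  (forall i, P i -> F i <= G i) ->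
  \big[Rplus/0]_(i <- s | P i) F i <= \big[Rplus/0]_(i <- s | P i) G i.
Proof. move=> H; apply: big_ind2 => //; [lra | move=> *; lra]. Qed.

Lemma big_prod_ge0 (I : Type) (s : seq I) (F : I -> R) :
  (forall i, 0 <= F i) -> 0 <= \big[Rmult/1]_(i <- s) F i.
Proof. move=> H; apply: big_ind => //; [lra | move=> *; by apply: Rmult_le_pos]. Qed.

Lemma big_le_one (I : finType) (F : I -> R) (j : I) :
  (forall i, 0 <= F i) -> F j <= \big[Rplus/0]_(i : I) F i.
Proof.
move=> H; rewrite (bigD1 j) //=.
have := @big_ge0 _ (index_enum I) (fun i => i != j) F (fun i _ => H i). lra.
Qed.

Lemma big_split_R (I : Type) (s : seq I) (F G : I -> R) :
  \big[Rplus/0]_(i <- s) (F i + G i) =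
  \big[Rplus/0]_(i <- s) F i + \big[Rplus/0]_(i <- s) G i.
Proof. exact: big_split. Qed.

Lemma big_const_mulR (I : Type) (s : seq I) (c : R) (F : I -> R) :
  \big[Rplus/0]_(i <- s) (c * F i) = c * \big[Rplus/0]_(i <- s) F i.
Proof. by rewrite big_distrr. Qed.

Lemma big_oppR (I : Type) (s : seq I) (F : I -> R) :
  \big[Rplus/0]_(i <- s) (- F i) = - \big[Rplus/0]_(i <- s) F i.
Proof.
elim: s => [|x s IH]; rewrite ?big_nil ?big_cons ?IH; lra.
Qed.

Lemma enum_ord0 : enum 'I_0 = [::].
Proof. apply: size0nil; by rewrite size_enum_ord. Qed.

Lemma prod_enum_ord n (F : 'I_n -> R) :
  \big[Rmult/1]_(j <- enum 'I_n) F j = \big[Rmult/1]_(j < n) F j.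
Proof. by rewrite big_enum. Qed.

Lemma devP_cons (A X : finType) n (beh : seq A -> seq X -> behavior A X)
  (a0 : A) (a : n.-tuple A) (x0 : X) (x : n.-tuple X) :
  devP beh [tuple of a0 :: a] [tuple of x0 :: x] =
  beh [::] [::] a0 x0 * devP (fun sa sx => beh (a0 :: sa) (x0 :: sx)) a x.
Proof.
rewrite /devP !prodRE !prod_enum_ord big_ord_recl /= !tnth0.
congr (_ * _); apply: eq_bigr => j _.
by rewrite !tnthS /= add0n.
Qed.

Lemma devP_ge0 (A X : finType) n (beh : seq A -> seq X -> behavior A X)
  (Hb : forall sa sx, size sa = size sx -> (size sa < n)%N -> forall x, is_distr (fun a => beh sa sx a x))
  (a : n.-tuple A) (x : n.-tuple X) : 0 <= devP beh a x.
Proof.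
rewrite /devP prodRE; apply: big_prod_ge0 => j.
have Hs : forall (T : Type) (t : n.-tuple T), size (take j t) = j.
  by move=> T t; rewrite size_take size_tuple ltn_ord.
apply: (proj1 (Hb _ _ _ _ _)); by rewrite ?Hs.
Qed.

Lemma devP_sum (A X : finType) n : forall (beh : seq A -> seq X -> behavior A X),
  (forall sa sx, size sa = size sx -> (size sa < n)%N -> forall x, is_distr (fun a => beh sa sx a x)) ->
  forall x : n.-tuple X, \big[Rplus/0]_(a : n.-tuple A) devP beh a x = 1.
Proof.
elim: n => [|n IH] beh Hb x.
  rewrite (eq_bigr (fun _ => 1)); last first.
    by move=> a _; rewrite /devP prodRE enum_ord0 big_nil.
  rewrite big_const card_tuple expn0 /=; lra.
rewrite (reindex (fun p : A * n.-tuple A => [tuple of p.1 :: p.2])); last first.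
  exists (fun t : n.+1.-tuple A => (thead t, [tuple of behead t])).
    by move=> [a0 t] _ /=; rewrite theadE; congr (_, _); apply: val_inj.
  by move=> t _ /=; rewrite -tuple_eta.
rewrite -(pair_bigA _ (fun (a0 : A) (t : n.-tuple A) => devP beh [tuple of a0 :: t] x)) /=.
rewrite [x]tuple_eta.
rewrite (eq_bigr (fun a0 => beh [::] [::] a0 (thead x))); last first.
  move=> a0 _; rewrite (eq_bigr (fun t => beh [::] [::] a0 (thead x) *
     devP (fun sa sx => beh (a0 :: sa) (thead x :: sx)) t [tuple of behead x])); last first.
    by move=> t _; rewrite devP_cons.
  rewrite big_const_mulR IH ?Rmult_1_r //.
  move=> sa sx Hs Hn x'; apply: Hb => /=; [by rewrite Hs | exact: Hn].
have [_ H1] := Hb [::] [::] erefl erefl (thead x).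
by rewrite -H1 fsumE.
Qed.

Lemma inputP_devP (X : finType) n (pi : X -> R) (x : n.-tuple X) :
  inputP pi x = devP (fun (_ : seq X) (_ : seq unit) (b : X) (_ : unit) => pi b) x [tuple of nseq n tt].
Proof. by []. Qed.

Lemma fsum_pair (T1 T2 : finType) (G : T1 * T2 -> R) :
  fsum G = \big[Rplus/0]_(x1 : T1) \big[Rplus/0]_(x2 : T2) G (x1, x2).
Proof. by rewrite fsumE pair_bigA; apply: eq_bigr => [[]]. Qed.

Definition avgB (A X : finType) (I : Type) (F : I -> behavior A X) (s : seq I) : A -> X -> R :=
  fun a x => / INR (size s) * sumR s (fun i => F i a x).

Section Bell.
Variables (A X : finType) (t : nat) (f : 'I_t -> A -> X -> R).

Lemma bell_lin u v (p1 p2 : behavior A X) k :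
  bell_val f (fun a x => u * p1 a x + v * p2 a x) k = u * bell_val f p1 k + v * bell_val f p2 k.
Proof.
rewrite /bell_val !fsumE -!big_const_mulR -big_split_R.
apply: eq_bigr => z _; ring.
Qed.

Lemma bell_avg I (F : I -> behavior A X) s k :
  bell_val f (avgB F s) k = / INR (size s) * sumR s (fun i => bell_val f (F i) k).
Proof.
rewrite /bell_val /avgB fsumE sumRE.
rewrite (eq_bigr (fun z : A * X => / INR (size s) *
   \big[Rplus/0]_(i <- s) (f k z.1 z.2 * F i z.1 z.2))); last first.
  move=> z _; rewrite sumRE -big_const_mulR -big_const_mulR -big_const_mulR.
  apply: eq_bigr => i _; ring.
rewrite big_const_mulR exchange_big; congr (_ * _).
by apply: eq_bigr => i _; rewrite fsumE.
Qed.
End Bell.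

Lemma sumR_cons T (x : T) s F : sumR (x :: s) F = F x + sumR s F.
Proof. by []. Qed.

Lemma jensen (A X : finType) (t : nat) (Q : behavior A X -> Prop)
  (Qconv : forall q p1 p2, 0 <= q <= 1 -> Q p1 -> Q p2 ->
             Q (fun a x => q * p1 a x + (1 - q) * p2 a x))
  (f : 'I_t -> A -> X -> R) (H : vec t -> R)
  (Hconv : forall q p1 p2, 0 <= q <= 1 -> Q p1 -> Q p2 ->
     H (fun i => q * bell_val f p1 i + (1 - q) * bell_val f p2 i)
       <= q * H (bell_val f p1) + (1 - q) * H (bell_val f p2))
  (I : Type) (F : I -> behavior A X) (HQ : forall i, Q (F i)) (s : seq I) :
  s <> [::] -> Q (avgB F s) /\
  H (bell_val f (avgB F s)) <= / INR (size s) * sumR s (fun i => H (bell_val f (F i))).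
Proof.
elim: s => [//|i s IH] _.
case: s IH => [|j s] IH.
  have -> : avgB F [:: i] = F i.
    apply: functional_extensionality => a; apply: functional_extensionality => x.
    rewrite /avgB /=; field.
  split; first exact: HQ.
  rewrite /= Rinv_1; lra.
have [HQs HHs] := IH (fun e => ltac:(discriminate e)).
set m := size (j :: s).
have Hm : 0 < INR m by apply: lt_0_INR; rewrite /m /=; apply/ltP.
have Hsz : INR (size (i :: j :: s)) = INR m + 1 by rewrite /m -S_INR.
set q := / (INR m + 1).
have Hq : 0 <= q <= 1.
  rewrite /q; split; first (apply: Rlt_le; apply: Rinv_0_lt_compat; lra).
  rewrite -Rinv_1; apply: Rinv_le_contravar; lra.
have Hav : avgB F (i :: j :: s) = (fun a x => q * F i a x + (1 - q) * avgB F (j :: s) a x).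
  apply: functional_extensionality => a; apply: functional_extensionality => x.
  rewrite /avgB Hsz {1}sumR_cons -/m /q; field; lra.
rewrite Hav; split; first by apply: Qconv.
have -> : bell_val f (fun a x => q * F i a x + (1 - q) * avgB F (j :: s) a x) =
          (fun k => q * bell_val f (F i) k + (1 - q) * bell_val f (avgB F (j :: s)) k).
  apply: functional_extensionality => k; exact: bell_lin.
apply: Rle_trans; first exact: Hconv.
rewrite sumR_cons.
have Hle : (1 - q) * H (bell_val f (avgB F (j :: s))) <=
       (1 - q) * (/ INR m * sumR (j :: s) (fun i0 => H (bell_val f (F i0)))).
  apply: Rmult_le_compat_l; [lra | exact: HHs].
have E : (1 - q) * (/ INR m * sumR (j :: s) (fun i0 => H (bell_val f (F i0)))) =
   q * sumR (j :: s) (fun i0 => H (bell_val f (F i0))) by rewrite /q; field; lra.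
lra.
Qed.

Lemma ln_le' x y : 0 < x -> x <= y -> ln x <= ln y.
Proof.
move=> Hx [Hxy|<-]; last lra.
by apply: Rlt_le; apply: ln_increasing.
Qed.

Lemma ln_prod (I : eqType) (s : seq I) (G : I -> R) :
  (forall i, 0 <= G i) -> 0 < \big[Rmult/1]_(i <- s) G i ->
  (forall i, i \in s -> 0 < G i) /\ ln (\big[Rmult/1]_(i <- s) G i) = \big[Rplus/0]_(i <- s) ln (G i).
Proof.
move=> Hg; elim: s => [|i s IH].
  by rewrite !big_nil ln_1.
rewrite !big_cons => Hp.
have Hs0 := big_prod_ge0 s Hg.
have Hgi : 0 < G i.
  case: (Hg i) => // E; rewrite -E in Hp; lra.
have Hs : 0 < \big[Rmult/1]_(i <- s) G i.
  case: Hs0 => // E; rewrite -E in Hp; lra.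
have [IH1 IH2] := IH Hs.
split.
  move=> j; rewrite in_cons => /orP [/eqP -> //| Hj]; exact: IH1.
by rewrite ln_mult // IH2.
Qed.

Lemma INR_big (I : Type) (s : seq I) (P : pred I) (F : I -> nat) :
  INR (\sum_(i <- s | P i) F i)%N = \big[Rplus/0]_(i <- s | P i) INR (F i).
Proof. apply: (big_morph INR) => //; exact: plus_INR. Qed.

Lemma nu_sum (X : finType) n (Xr : pred X) (x : n.-tuple X) (eta : R) :
  eta * INR (nu Xr x) = \big[Rplus/0]_(j <- enum 'I_n) (if Xr (tnth x j) then 0 else eta).
Proof.
rewrite /nu -sum1_count big_tuple INR_big big_enum /=.
rewrite big_distrr /= big_mkcond /= [RHS]big_mkcond /=.
apply: eq_bigr => j _; rewrite ?inE; case: (Xr (tnth x j)) => /=; lra.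
Qed.

Lemma ln2_pos : 0 < ln 2.
Proof. have := ln_lt_2; lra. Qed.

Lemma logbound (A X : finType) (t n : nat) (Q : behavior A X -> Prop)
  (Qprob : forall p, Q p -> forall x, is_distr (fun a => p a x))
  (Qconv : forall q p1 p2, 0 <= q <= 1 -> Q p1 -> Q p2 ->
             Q (fun a x => q * p1 a x + (1 - q) * p2 a x))
  (f : 'I_t -> A -> X -> R) (Xr : pred X)
  (H : vec t -> R) (HRB : is_RB_function Q f Xr H)
  (HV : (vec t -> Prop) -> R) (HHV : is_set_extension Q f H HV)
  (eta : R) (Heta : forall p, Q p -> H (bell_val f p) <= eta)
  (eps Hthr : R)
  (V : n.-tuple A -> n.-tuple X -> R -> vec t -> Prop)
  (beh : seq A -> seq X -> behavior A X) (Hbeh : device_ok n Q beh)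
  (a : n.-tuple A) (x : n.-tuple X) :
  V a x eps (avg_val f beh a x) ->
  INR n * HV (V a x eps) - INR (nu Xr x) * eta >= Hthr ->
  0 < devP beh a x ->
  ln (devP beh a x) <= - Hthr * ln 2.
Proof.
move=> HinV Hlam Hpos.
have [HRB0 [HRB1 HRB2]] := HRB.
pose p := fun j : 'I_n => beh (take j a) (take j x).
have HQ : forall j, Q (p j).
  move=> j; apply: Hbeh; rewrite ?size_take ?size_tuple ?ltn_ord //.
pose h := fun j => H (bell_val f (p j)).
have SA : INR n * HV (V a x eps) <= sumR (enum 'I_n) h.
  have [E|NE] : enum 'I_n = [::] \/ enum 'I_n <> [::].
    by case: (enum 'I_n) => [|? ?]; [left | right].
  - have n0 : INR n = 0 by rewrite -(size_enum_ord n) E.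
    rewrite n0 E /=; lra.
  - have [HQa HHa] := jensen Qconv HRB2 HQ NE.
    have Eavg : avg_val f beh a x = bell_val f (avgB p (enum 'I_n)).
      apply: functional_extensionality => k.
      by rewrite bell_avg size_enum_ord.
    have Hn : (0 < n)%N.
      by rewrite -(size_enum_ord n); case: (enum 'I_n) NE.
    have Hn' : 0 < INR n by apply: lt_0_INR; apply/ltP.
    have := (proj1 HHV) (V a x eps) _ HQa; rewrite -Eavg => /(_ HinV) Hle.
    rewrite size_enum_ord in HHa.
    apply: Rle_trans (_ : INR n * (/ INR n * sumR (enum 'I_n) h) <= _).
      apply: Rmult_le_compat_l; [lra| rewrite Eavg in Hle; exact: Rle_trans Hle HHa].
    right; field; lra.
have [Hfac Hln] : (forall j, j \in enum 'I_n -> 0 < p j (tnth a j) (tnth x j)) /\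
     ln (devP beh a x) = \big[Rplus/0]_(j <- enum 'I_n) ln (p j (tnth a j) (tnth x j)).
  rewrite /devP prodRE in Hpos *; apply: ln_prod => // j.
  by case: (Qprob _ (HQ j) (tnth x j)) => Hnn _; apply: Hnn.
have SC : forall j, ln (p j (tnth a j) (tnth x j)) <=
            ln 2 * (- h j + (if Xr (tnth x j) then 0 else eta)).
  move=> j; have Hp := Hfac j (mem_enum _ j).
  have L2 := ln2_pos.
  case E: (Xr (tnth x j)).
  - have := HRB1 _ (HQ j) (tnth a j) (tnth x j) E Hp.
    rewrite /log2 => Hge.
    have : ln (p j (tnth a j) (tnth x j)) / ln 2 <= - h j by rewrite /h; lra.
    move=> Hle.
    have -> : ln (p j (tnth a j) (tnth x j)) = ln 2 * (ln (p j (tnth a j) (tnth x j)) / ln 2).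
      field; lra.
    apply: Rmult_le_compat_l; lra.
  - have Hp1 : p j (tnth a j) (tnth x j) <= 1.
      have [Hnn Hs] := Qprob _ (HQ j) (tnth x j).
      rewrite -Hs fsumE; exact: (big_le_one (tnth a j) Hnn).
    have := ln_le' Hp Hp1; rewrite ln_1 => Hl.
    have := Heta _ (HQ j); rewrite -/(h j) => Hh.
    have : 0 <= ln 2 * (- h j + eta) by apply: Rmult_le_pos; lra.
    lra.
have SD : ln (devP beh a x) <= ln 2 * (- sumR (enum 'I_n) h + eta * INR (nu Xr x)).
  rewrite Hln nu_sum sumRE -big_oppR -big_split_R -big_const_mulR.
  apply: big_leR => j _; exact: SC j.
have L2 := ln2_pos.
have : - sumR (enum 'I_n) h + eta * INR (nu Xr x) <= - Hthr by lra.
move=> Hfin.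
have : ln 2 * (- sumR (enum 'I_n) h + eta * INR (nu Xr x)) <= ln 2 * (- Hthr).
  apply: Rmult_le_compat_l; lra.
lra.
Qed.

Lemma exp_le' x y : x <= y -> exp x <= exp y.
Proof. move=> [H|->]; [apply: Rlt_le; exact: exp_increasing | lra]. Qed.

Lemma maxR_ge0 T (s : seq T) F : 0 <= maxR s F.
Proof. elim: s => [|x s IH] /=; [lra | apply: Rle_trans IH (Rmax_r _ _)]. Qed.

Lemma maxR_le T (s : seq T) F M : 0 <= M -> (forall y, F y <= M) -> maxR s F <= M.
Proof. move=> HM H; elim: s => [|x s IH] //=; exact: Rmax_lub. Qed.

Lemma maxR_ge (T : eqType) (s : seq T) F y : y \in s -> F y <= maxR s F.
Proof.
elim: s => [//|x s IH]; rewrite in_cons => /orP [/eqP ->|Hy] /=.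
  exact: Rmax_l.
apply: Rle_trans (Rmax_r _ _); exact: IH.
Qed.

Lemma ind_cases (P : Prop) : (P /\ Defs.ind P = 1) \/ (~ P /\ Defs.ind P = 0).
Proof. rewrite /Defs.ind; case: excluded_middle_informative => H; [left|right]; tauto. Qed.

Theorem theorem1 (A X : finType) (t n : nat)
  (Q : behavior A X -> Prop)
  (Qprob : forall p, Q p -> forall x, is_distr (fun a => p a x))
  (Qconv : forall q p1 p2, 0 <= q <= 1 -> Q p1 -> Q p2 ->
             Q (fun a x => q * p1 a x + (1 - q) * p2 a x))
  (f : 'I_t -> A -> X -> R)
  (Xr : pred X) (HXr : exists x, Xr x)
  (H : vec t -> R) (HRB : is_RB_function Q f Xr H)
  (HV : (vec t -> Prop) -> R) (HHV : is_set_extension Q f H HV)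
  (eta : R) (Heta : forall p, Q p -> H (bell_val f p) <= eta)
  (eps eps' Hthr : R) (Heps : 0 < eps) (Heps' : 0 < eps')
  (pi : X -> R) (Hpi : is_distr pi)
  (V : n.-tuple A -> n.-tuple X -> R -> vec t -> Prop)
  (HVconf : conf_region Q f pi eps V)
  (beh : seq A -> seq X -> behavior A X) (Hbeh : device_ok n Q beh) :
  let lam := fun (a : n.-tuple A) (x : n.-tuple X) =>
               INR n * HV (V a x eps) - INR (nu Xr x) * eta >= Hthr in
  exists Pt : option (n.-tuple A) -> n.-tuple X -> R,
    (forall x, is_distr (fun o => Pt o x)) /\
    tv_dist (fun z : option (n.-tuple A) * n.-tuple X => P_AX beh pi z.1 z.2)
            (fun z : option (n.-tuple A) * n.-tuple X => Pt_AX pi Pt z.1 z.2) <= eps /\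
    (Pr_event (Pt_AX pi Pt) lam <= eps' \/
     Hmin_lam (Pt_AX pi Pt) lam >= Hthr - log2 (/ eps')).
Proof.
move=> lam.
have Hb : forall sa sx, size sa = size sx -> (size sa < n)%N ->
    forall x, is_distr (fun a => beh sa sx a x).
  move=> sa sx Hs Hn x; exact: Qprob (Hbeh _ _ Hs Hn) x.
have Dge0 := devP_ge0 Hb.
have Dsum := devP_sum Hb.
have Hpib : forall (sa : seq X) (sx : seq unit), size sa = size sx -> (size sa < n)%N ->
    forall u : unit, is_distr (fun b => (fun (_ : seq X) (_ : seq unit) (b : X) (_ : unit) => pi b) sa sx b u).
  by move=> *.
have Ige0 : forall x : n.-tuple X, 0 <= inputP pi x.
  move=> x; rewrite inputP_devP; exact: devP_ge0 Hpib _ _.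
have Isum : \big[Rplus/0]_(x : n.-tuple X) inputP pi x = 1.
  rewrite -(devP_sum Hpib [tuple of nseq n tt]); apply: eq_bigr => x _; by rewrite inputP_devP.
pose inV := fun a x => V a x eps (avg_val f beh a x).
pose Pt := fun (o : option (n.-tuple A)) (x : n.-tuple X) => match o with
  | Some a => devP beh a x * Defs.ind (inV a x)
  | None => \big[Rplus/0]_(a : n.-tuple A) (devP beh a x * (1 - Defs.ind (inV a x))) end.
have ind01 : forall P : Prop, 0 <= Defs.ind P <= 1.
  move=> P; case: (ind_cases P) => [[_ ->]|[_ ->]]; lra.
exists Pt; split; [|split].
-
  move=> x; split.
    case=> [a|] /=.
      have := ind01 (inV a x); have := Dge0 a x; nra.
    apply: big_ge0 => a _; have := ind01 (inV a x); have := Dge0 a x; nra.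
  rewrite fsumE big_opt /= -big_split_R -[RHS](Dsum x).
  apply: eq_bigr => a _; ring.
-
  have HC := HVconf _ Hbeh; rewrite fsum_pair /= in HC.
  have Tot : \big[Rplus/0]_(a : n.-tuple A) \big[Rplus/0]_(x : n.-tuple X) (devP beh a x * inputP pi x) = 1.
    rewrite exchange_big /= -Isum; apply: eq_bigr => x _.
    rewrite (eq_bigr (fun a => inputP pi x * devP beh a x)); last by move=> *; ring.
    by rewrite big_const_mulR Dsum Rmult_1_r.
  pose D := \big[Rplus/0]_(a : n.-tuple A) \big[Rplus/0]_(x : n.-tuple X)
              (devP beh a x * inputP pi x * (1 - Defs.ind (inV a x))).
  have ED : D = 1 - \big[Rplus/0]_(a : n.-tuple A) \big[Rplus/0]_(x : n.-tuple X)
        (devP beh a x * inputP pi x * Defs.ind (V a x eps (avg_val f beh a x))).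
    rewrite -Tot /D /Rminus -big_oppR -big_split_R; apply: eq_bigr => a _.
    rewrite -big_oppR -big_split_R; apply: eq_bigr => x _; rewrite /inV; ring.
  have E1 : \big[Rplus/0]_(x : n.-tuple X) Rabs (0 - Pt None x * inputP pi x) = D.
    rewrite /D exchange_big /=; apply: eq_bigr => x _.
    rewrite Rminus_0_l Rabs_Ropp Rabs_pos_eq; last first.
      apply: Rmult_le_pos (Ige0 x); apply: big_ge0 => a _.
      have := ind01 (inV a x); have := Dge0 a x; nra.
    rewrite /Pt Rmult_comm -big_const_mulR; apply: eq_bigr => a _; ring.
  have E2 : \big[Rplus/0]_(a : n.-tuple A) \big[Rplus/0]_(x : n.-tuple X)
      Rabs (devP beh a x * inputP pi x - Pt (Some a) x * inputP pi x) = D.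
    apply: eq_bigr => a _; apply: eq_bigr => x _.
    rewrite /Pt Rabs_pos_eq; first ring.
    have := ind01 (inV a x); have := Dge0 a x; have := Ige0 x.
    move=> h1 h2 h3.
    have : 0 <= devP beh a x * inputP pi x by apply: Rmult_le_pos.
    nra.
  have HC' : \big[Rplus/0]_(a : n.-tuple A) \big[Rplus/0]_(x : n.-tuple X)
        (devP beh a x * inputP pi x * Defs.ind (V a x eps (avg_val f beh a x))) >= 1 - eps := HC.
  rewrite /tv_dist fsum_pair big_opt /= /Pt_AX E1 E2.
  lra.
-
  pose B := exp (- Hthr * ln 2).
  have HB : 0 < B := exp_pos _.
  pose g := fun a x => Pt_AX pi Pt (Some a) x * Defs.ind (lam a x).
  have gB : forall a x, 0 <= g a x <= B * inputP pi x.
    move=> a x; rewrite /g /Pt_AX /Pt.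
    have HI := Ige0 x; have HD := Dge0 a x.
    case: (ind_cases (inV a x)) => [[Hin ->]|[_ ->]]; last by split; nra.
    case: (ind_cases (lam a x)) => [[Hl ->]|[_ ->]]; last by split; nra.
    have : devP beh a x <= B.
      case: HD => [Hpos|<-]; last lra.
      have := logbound Qprob Qconv HRB HHV Heta Hbeh Hin Hl Hpos => Hln.
      rewrite -(exp_ln _ Hpos); exact: exp_le' Hln.
    move=> HdB; split; nra.
  pose Pl := fsum (fun ax : n.-tuple A * n.-tuple X => g ax.1 ax.2).
  pose Px := fun x => fsum (fun a => g a x).
  change (Pl <= eps' \/ - log2 (fsum (fun x => Px x / Pl * fmax (fun a => g a x / Px x)))
     >= Hthr - log2 (/ eps')).
  have EPl : Pl = \big[Rplus/0]_(x : n.-tuple X) \big[Rplus/0]_(a : n.-tuple A) g a x.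
    by rewrite /Pl fsum_pair exchange_big.
  case: (Rle_or_lt Pl eps') => [Hle|Hlt]; [by left | right].
  have HPl : 0 < Pl by lra.
  set S := fsum _.
  have Pxge : forall x, 0 <= Px x.
    move=> x; rewrite /Px fsumE; apply: big_ge0 => a _; exact: (proj1 (gB a x)).
  pose term := fun x => Px x / Pl * fmax (fun a => g a x / Px x).
  have term_ge0 : forall x, 0 <= term x.
    move=> x; rewrite /term; apply: Rmult_le_pos; last exact: maxR_ge0.
    apply: Rmult_le_pos (Pxge x) _; apply: Rlt_le; exact: Rinv_0_lt_compat.
  have term_le : forall x, term x <= B * inputP pi x / Pl.
    move=> x; rewrite /term; have HI := Ige0 x.
    have HPli : 0 < / Pl by apply: Rinv_0_lt_compat.
    case: (Pxge x) => [Pxpos|Px0]; last first.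
      rewrite -Px0 /Rdiv Rmult_0_l Rmult_0_l.
      apply: Rmult_le_pos => //; [nra | lra].
    have HPxi : 0 < / Px x by apply: Rinv_0_lt_compat.
    have Hm : fmax (fun a => g a x / Px x) <= B * inputP pi x / Px x.
      apply: maxR_le; first by rewrite /Rdiv; apply: Rmult_le_pos; [nra | lra].
      move=> a; rewrite /Rdiv; apply: Rmult_le_compat_r; [lra | exact: (proj2 (gB a x))].
    apply: Rle_trans (_ : Px x / Pl * (B * inputP pi x / Px x) <= _).
      apply: Rmult_le_compat_l => //; rewrite /Rdiv; apply: Rmult_le_pos; lra.
    right; field; lra.
  have S_le : S <= B / Pl.
    rewrite /S fsumE -/term.
    apply: Rle_trans (_ : \big[Rplus/0]_(x : n.-tuple X) (B / Pl * inputP pi x) <= _).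
      apply: big_leR => x _; apply: Rle_trans (term_le x) _; right; field; lra.
    by rewrite big_const_mulR Isum Rmult_1_r; right.
  have S_pos : 0 < S.
    case: (classic (exists a x, 0 < g a x)) => [[a0 [x0 Hg]]|Hno].
    - have H1 : term x0 <= S by rewrite /S fsumE; exact: (big_le_one x0 term_ge0).
      have H2 : g a0 x0 <= Px x0.
        rewrite /Px fsumE; apply: (big_le_one a0 (F := fun a => g a x0)) => a; exact: (proj1 (gB a x0)).
      have H3 : g a0 x0 / Px x0 <= fmax (fun a => g a x0 / Px x0).
        rewrite /fmax; apply: (maxR_ge (fun a => g a x0 / Px x0)); exact: mem_enum.
      have H4 : Px x0 / Pl * (g a0 x0 / Px x0) <= term x0.
        rewrite /term; apply: Rmult_le_compat_l => //; rewrite /Rdiv; apply: Rmult_le_pos.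
          exact: Pxge.
        apply: Rlt_le; exact: Rinv_0_lt_compat.
      have H5 : Px x0 / Pl * (g a0 x0 / Px x0) = g a0 x0 / Pl by field; lra.
      have H6 : 0 < g a0 x0 / Pl by apply: Rdiv_lt_0_compat.
      lra.
    - exfalso.
      have : Pl <= 0.
        rewrite EPl; apply: Rle_trans (_ : \big[Rplus/0]_(x : n.-tuple X) 0 <= 0).
          apply: big_leR => x _.
          apply: Rle_trans (_ : \big[Rplus/0]_(a : n.-tuple A) 0 <= 0); last by rewrite big1; [right|].
          apply: big_leR => a _; apply: Rnot_lt_le => Hp; apply: Hno; by exists a, x.
        by rewrite big1; [right|].
      lra.
  have L2 := ln2_pos.
  have Hl1 : ln S <= ln (B / Pl) by exact: ln_le' S_pos S_le.
  have Hl2 : ln (B / Pl) = - Hthr * ln 2 - ln Pl.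
    rewrite /Rdiv ln_mult //; last exact: Rinv_0_lt_compat.
    by rewrite ln_Rinv // /B ln_exp.
  have Hl3 : ln eps' < ln Pl by apply: ln_increasing.
  rewrite /log2 ln_Rinv //.
  have -> : Hthr - - ln eps' / ln 2 = (Hthr * ln 2 + ln eps') * / ln 2 by field; lra.
  have -> : - (ln S / ln 2) = (- ln S) * / ln 2 by field; lra.
  apply: Rle_ge; apply: Rmult_le_compat_r.
    apply: Rlt_le; exact: Rinv_0_lt_compat.
  lra.
Qed.
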